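(* Let $d\ge 2$, let $\hat{P}\in\mathbb{R}^{d\times d}$ be an orthogonal projection matrix of rank $p$ with $1\le p\le d-1$, let $\hat{P}^{\perp}=I-\hat{P}$ and $q=d-p$. Let $\lambda_1,\lambda_2>0$, let $k\ge 1$, let $x_{a_0},\dots,x_{a_{k-1}}\in\mathbb{R}^d$ be vectors with $\|x_{a_i}\|\le 1$, let $D_k\in\mathbb{R}^{k\times d}$ be the matrix whose rows are $x_{a_0}^\top,\dots,x_{a_{k-1}}^\top$, and let $B_k=D_k^\top D_k+\lambda_1\hat{P}^{\perp}+\lambda_2\hat{P}$. Then $$\log\left(\frac{\det(B_k)}{\det(\lambda_1\hat{P}^{\perp}+\lambda_2\hat{P})}\right)\le S_k^{\lambda_1,\lambda_2}:=p\log\left(1+\frac{k}{p\lambda_2}\right)+q\log\left(1+\frac{k}{q\lambda_1}\right).$$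
   Context: $\|\cdot\|$ denotes the Euclidean norm. An orthogonal projection matrix is a symmetric idempotent matrix. *)

(* Defs.v *)
From HB Require Import structures.
From mathcomp Require Import all_boot all_order all_algebra.
From mathcomp Require Import all_classical all_reals all_analysis.
Set Implicit Arguments. Unset Strict Implicit. Unset Printing Implicit Defensive.
Import Order.TTheory GRing.Theory Num.Theory.
Local Open Scope ring_scope.

Definition eucl_norm (R : realType) (d : nat) (x : 'rV[R]_d) : R :=
  Num.sqrt (\sum_(j < d) x 0 j ^+ 2).

Definition orth_proj (R : realType) (d : nat) (P : 'M[R]_d) : Prop :=
  P^T = P /\ P *m P = P.

(* Main.v *)
Require Import Defs.
From HB Require Import structures.
From mathcomp Require Import all_boot all_order all_algebra.
From mathcomp Require Import all_classical all_reals all_analysis.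
From mathcomp Require Import zify ring lra.
Import Order.TTheory GRing.Theory Num.Theory.
Local Open Scope ring_scope.
Lemma similar_cast (F : fieldType) n1 n2 n (e : (n1 + n2 = n)%N)
  (S : 'M[F]_(n1 + n2, n)) (X : 'M[F]_n) (Y : 'M[F]_(n1 + n2)) :
  row_free S -> S *m X = Y *m S -> \det X = \det Y /\ \tr X = \tr Y.
Proof.
move: S X Y; case: n / e => S X Y.
rewrite row_free_unit => Su SXY.
have -> : X = invmx S *m Y *m S by rewrite -mulmxA -SXY mulmxA mulVmx // mul1mx.
split.
  by rewrite !det_mulmx det_inv mulrC mulrA divff ?mul1r // -unitfE -unitmxE.
by rewrite mxtrace_mulC mulmxA mulmxV // mul1mx.
Qed.

Lemma proj_detr (F : fieldType) n (P : 'M[F]_n) (u v : F) : P *m P = P ->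
  \det (u *: P + v *: (1%:M - P)) = u ^+ \rank P * v ^+ (n - \rank P) /\
  \tr (u *: P + v *: (1%:M - P)) = u * (\rank P)%:R + v * (n - \rank P)%:R.
Proof.
move=> PP.
set K := kermx P.
have rK : \rank K = (n - \rank P)%N by rewrite mxrank_ker.
have e : (\rank P + \rank K = n)%N by rewrite rK subnKC // rank_leq_row.
pose S := col_mx (row_base P) (row_base K).
set r := \rank P. set r' := \rank K.
pose Y := block_mx (u%:M : 'M[F]_r) 0 0 (v%:M : 'M[F]_r').
have Sfree : row_free S.
  rewrite /row_free -addsmxE.
  suff -> : \rank (row_base P + row_base K)%MS = n by rewrite e.
  apply/anti_leq; rewrite rank_leq_col /=.
  rewrite -{1}(mxrank1 F n) mxrankS //.
  have -> : (1%:M : 'M[F]_n) = P + (1%:M - P) by rewrite addrC subrK.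
  rewrite (adds_eqmx (eq_row_base P) (eq_row_base K)).
  apply: addmx_sub_adds => //; apply/sub_kermxP.
  by rewrite mulmxBl mul1mx PP subrr.
have h1 : row_base P *m P = row_base P.
  have /submxP [W ->] : (row_base P <= P)%MS by rewrite eq_row_base.
  by rewrite -mulmxA PP.
have h2 : row_base K *m P = 0.
  apply/sub_kermxP; by rewrite eq_row_base.
have SXY : S *m (u *: P + v *: (1%:M - P)) = Y *m S.
  rewrite mul_col_mx mul_block_col !mul0mx addr0 add0r !mul_scalar_mx.
  rewrite !mulmxDr -!scalemxAr.
  by rewrite !mulmxBr !mulmx1 h1 h2 subrr subr0 !scaler0 addr0 add0r.
have [-> ->] := @similar_cast F _ _ _ e S _ Y Sfree SXY.
split; first by rewrite det_ublock !det_scalar rK.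
by rewrite mxtrace_block !mxtrace_scalar rK !mulr_natr.
Qed.

Definition PDm {R : realFieldType} {n} (C : 'M[R]_n) :=
  C^T = C /\ forall v : 'rV[R]_n, v != 0 -> 0 < (v *m C *m v^T) 0 0.

Lemma quad_delta (R : realFieldType) n (C : 'M[R]_n) i :
  ((delta_mx 0 i : 'rV[R]_n) *m C *m (delta_mx 0 i : 'rV[R]_n)^T) 0 0 = C i i.
Proof. by rewrite trmx_delta -rowE -colE !mxE. Qed.

Lemma PDm_diag (R : realFieldType) n (C : 'M[R]_n) i : PDm C -> 0 < C i i.
Proof.
case=> _ Cp; rewrite -quad_delta; apply: Cp.
apply/negP => /eqP/matrixP/(_ 0 i); rewrite !mxE !eqxx /= => /eqP.
by rewrite oner_eq0.
Qed.

Lemma hadamard (R : realFieldType) n (C : 'M[R]_n) :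
  PDm C -> \det C <= \prod_i C i i.
Proof.
elim: n C => [|n IH] C PC.
  by rewrite det_mx00 big_ord0.
have [Csym Cpos] := PC.
pose C1 : 'M[R]_(1 + n) := C.
have -> : C = C1 by [].
have c_gt0 : 0 < C1 0 0 by exact: (@PDm_diag R _ C1 0 PC).
set c := C1 0 0.
set a := ulsubmx C1; set w := ursubmx C1; set wl := dlsubmx C1; set Cd := drsubmx C1.
have ac : a = c%:M.
  rewrite [a]mx11_scalar /a !mxE; congr (_%:M); rewrite /c; congr (C1 _ _); exact/val_inj.
have wlw : wl = w^T.
  by rewrite /wl /w trmx_ursub Csym.
pose m := - c^-1 *: wl.
pose E : 'M[R]_(1 + n) := block_mx 1 0 m 1.
pose S := Cd - c^-1 *: (wl *m w).
have key : E *m C1 *m E^T = block_mx a 0 0 S.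
  rewrite -[C1]submxK -/a -/w -/wl -/Cd /E mulmx_block tr_block_mx mulmx_block.
  have cn0 : c != 0 by rewrite gt_eqF.
  have mA : m *m a + wl = 0.
    by rewrite ac mul_mx_scalar /m scalerA mulrN mulfV // scaleN1r addNr.
  have aM : a *m m^T + w = 0.
    by rewrite ac mul_scalar_mx /m linearZ /= wlw trmxK scalerA mulrN mulfV // scaleN1r addNr.
  rewrite !mul1mx !mul0mx !addr0 !trmx1 !trmx0 !mulmx1 !mulmx0 !addr0 mA aM mul0mx add0r.
  by rewrite /S /m -scalemxAl scaleNr addrC.
have detE : \det E = 1 by rewrite /E det_lblock !det1 mulr1.
have Eu : E \in unitmx by rewrite unitmxE detE unitr1.
have detC : \det C1 = c * \det S.
  have := congr1 determinant key.
  by rewrite !det_mulmx det_tr detE mul1r mulr1 det_ublock ac det_scalar1.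
have cn0 : c != 0 by rewrite gt_eqF.
have PS : PDm S.
  split.
    rewrite /S linearB linearZ /= trmx_mul /Cd trmx_drsub -/C1.
    have -> : C1^T = C1 by exact: Csym.
    by rewrite -/Cd {1}wlw trmxK -wlw.
  move=> v vn0.
  pose z : 'rV[R]_(1 + n) := row_mx 0 v.
  have zn0 : z *m E != 0.
    apply/negP => /eqP zE0.
    have : z = 0 by rewrite -[z]mulmx1 -(mulmxV Eu) mulmxA zE0 mul0mx.
    by move/eqP; rewrite row_mx_eq0 eqxx /= (negbTE vn0).
  have := Cpos _ zn0.
  have -> : z *m E *m C *m (z *m E)^T = z *m (E *m C1 *m E^T) *m z^T.
    by rewrite trmx_mul !mulmxA.
  rewrite key /z tr_row_mx mul_row_block mul_row_col !mul0mx !mulmx0 !add0r !mul0mx add0r.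
  by [].
have Sdiag i : S i i <= Cd i i.
  rewrite /S !mxE big_ord1 gerBl mxE.
  have := congr1 (fun M : 'cV[R]_n => M i ord0) wlw; rewrite /= !mxE => ->.
  rewrite -expr2; apply: mulr_ge0; first by rewrite invr_ge0 ltW.
  exact: sqr_ge0.
rewrite detC big_ord_recl.
have -> : C1 ord0 ord0 = c by rewrite /c; congr (C1 _ _); exact/val_inj.
rewrite ler_pM2l //; apply: le_trans (IH S PS) _.
apply: ler_prod => i _; rewrite (ltW (@PDm_diag R n S i PS)) /=.
apply: le_trans (Sdiag i) _; rewrite /Cd !mxE.
have -> : rshift 1 i = lift ord0 i by exact/val_inj.
by [].
Qed.

Arguments hadamard {R n C}.
Arguments PDm_diag {R n C} i.

Lemma det_le_tr {R : realFieldType} {n} {C : 'M[R]_n} :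
  PDm C -> \det C <= (\tr C / n%:R) ^+ n.
Proof.
move=> PC; apply: le_trans (hadamard PC) _.
have h := leif_AGM (I := 'I_n) (A := predT) (E := fun i => C i i).
have := (h (fun i _ => ltW (PDm_diag i PC))).1.
by rewrite card_ord.
Qed.

Lemma tr_AAt (R : realFieldType) m n (A : 'M[R]_(m, n)) :
  \tr (A *m A^T) = \sum_i \sum_j A i j ^+ 2.
Proof.
rewrite /mxtrace; apply: eq_bigr => i _; rewrite mxE.
by apply: eq_bigr => j _; rewrite mxE expr2.
Qed.

Lemma tr_AAt_ge0 (R : realFieldType) m n (A : 'M[R]_(m, n)) :
  0 <= \tr (A *m A^T).
Proof.
by rewrite tr_AAt; apply: sumr_ge0 => i _; apply: sumr_ge0 => j _; exact: sqr_ge0.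
Qed.

Lemma quad_ge0 (R : realFieldType) n (u : 'rV[R]_n) : 0 <= (u *m u^T) 0 0.
Proof. by have := @tr_AAt_ge0 _ _ _ u; rewrite /mxtrace big_ord1. Qed.

Lemma quad_gt0 (R : realFieldType) n (u : 'rV[R]_n) : u != 0 -> 0 < (u *m u^T) 0 0.
Proof.
move=> un0; rewrite lt_def quad_ge0 andbT.
have := @tr_AAt _ _ _ u; rewrite /mxtrace !big_ord1 => ->.
apply/eqP => h; move/eqP: un0; apply; apply/matrixP => i j.
rewrite ord1 mxE.
have := psumr_eq0P (P := predT) (F := fun j => u 0 j ^+ 2) (fun j _ => sqr_ge0 _) h.
by move/(_ j isT)/eqP; rewrite sqrf_eq0 => /eqP.
Qed.

Arguments quad_ge0 {R n}.
Arguments quad_gt0 {R n}.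

Lemma ln_prod_pow (R : realType) (m n : nat) (a b : R) : 0 < a -> 0 < b ->
  ln (a ^+ m * b ^+ n) = m%:R * ln a + n%:R * ln b.
Proof.
move=> ap bp.
have am : a ^+ m \in Num.pos by rewrite posrE exprn_gt0.
have bn : b ^+ n \in Num.pos by rewrite posrE exprn_gt0.
by rewrite (lnM am bn) (lnXn m ap) (lnXn n bp) !mulr_natl.
Qed.

Lemma lemma2_aux (R : realType) (d p k : nat) (P : 'M[R]_d)
  (lambda1 lambda2 : R) (x : 'I_k -> 'rV[R]_d) :
  (2 <= d)%N ->
  orth_proj P -> \rank P = p -> (1 <= p)%N -> (p <= d - 1)%N ->
  0 < lambda1 -> 0 < lambda2 -> (1 <= k)%N ->
  (forall i, eucl_norm (x i) <= 1) ->
  ln (\det ((\matrix_(i < k) x i)^T *m (\matrix_(i < k) x i) + lambda1 *: (1%:M - P) + lambda2 *: P)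
       / \det (lambda1 *: (1%:M - P) + lambda2 *: P))
    <= p%:R * ln (1 + k%:R / (p%:R * lambda2))
       + (d - p)%N%:R * ln (1 + k%:R / ((d - p)%N%:R * lambda1)).
Proof.
move=> d2 [Psym PP] rP p1 pd l1 l2 k1 xn.
set Q := 1%:M - P. set q := (d - p)%N. set D := \matrix_(i < k) x i.
set B := D^T *m D + lambda1 *: Q + lambda2 *: P.
have q1 : (1 <= q)%N by rewrite /q; lia.
have dpq : d = (p + q)%N by rewrite /q; lia.
have QQ : Q *m Q = Q by rewrite /Q mulmxBl mul1mx mulmxBr mulmx1 PP subrr subr0.
have PQ : P *m Q = 0 by rewrite /Q mulmxBr mulmx1 PP subrr.
have QP : Q *m P = 0 by rewrite /Q mulmxBl mul1mx PP subrr.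
have Qsym : Q^T = Q by rewrite /Q linearB /= trmx1 Psym.
have PQ1 : P + Q = 1%:M by rewrite /Q addrC subrK.
have pR : (0 < p%:R :> R) by rewrite ltr0n.
have qR : (0 < q%:R :> R) by rewrite ltr0n.
have projP (u v : R) := @proj_detr R d P u v PP.
rewrite rP -/q -/Q in projP.
clearbody Q.
have trP : \tr P = p%:R.
  by have [_] := projP 1 0; rewrite scale1r scale0r addr0 mul1r mul0r addr0.
have trQ : \tr Q = q%:R.
  by have [_] := projP 0 1; rewrite scale1r scale0r add0r mul1r mul0r add0r.
pose G := D^T *m D.
pose gP := \tr (P *m G).
pose gQ := \tr (Q *m G).
have gP0 : 0 <= gP.
  have -> : gP = \tr ((D *m P) *m (D *m P)^T).
    by rewrite /gP /G mulmxA mxtrace_mulC trmx_mul Psym !mulmxA -(mulmxA D P P) PP.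
  exact: tr_AAt_ge0.
have gQ0 : 0 <= gQ.
  have -> : gQ = \tr ((D *m Q) *m (D *m Q)^T).
    by rewrite /gQ /G mulmxA mxtrace_mulC trmx_mul Qsym !mulmxA -(mulmxA D Q Q) QQ.
  exact: tr_AAt_ge0.
have gPQ : gP + gQ <= k%:R.
  rewrite /gP /gQ -mxtraceD -mulmxDl PQ1 mul1mx /G mxtrace_mulC tr_AAt.
  rewrite -[X in _ <= X%:R]card_ord -sumr_const; apply: ler_sum => i _.
  have := xn i; rewrite /eucl_norm -sqrtr1 ler_sqrt ?ler01 //.
  rewrite sqrtr1 => h; apply: le_trans h; rewrite le_eqVlt; apply/orP; left; apply/eqP.
  by apply: eq_bigr => j _; rewrite /D mxE.
pose a2 := lambda2 + gP / p%:R.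
pose a1 := lambda1 + gQ / q%:R.
have a2p : 0 < a2 by rewrite /a2 ltr_wpDr // divr_ge0 // ltW.
have a1p : 0 < a1 by rewrite /a1 ltr_wpDr // divr_ge0 // ltW.
pose al := a2^-1. pose be := a1^-1.
have alp : 0 < al by rewrite invr_gt0.
have bep : 0 < be by rewrite invr_gt0.
pose sa := Num.sqrt al. pose sb := Num.sqrt be.
have sap : 0 < sa by rewrite sqrtr_gt0.
have sbp : 0 < sb by rewrite sqrtr_gt0.
pose T := sa *: P + sb *: Q.
pose T' := sa^-1 *: P + sb^-1 *: Q.
have TT : T *m T = al *: P + be *: Q.
  rewrite /T mulmxDl !mulmxDr -!scalemxAl -!scalemxAr PP QQ PQ QP !scaler0 addr0 add0r.
  by rewrite !scalerA -!expr2 !sqr_sqrtr // ltW.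
have TT' : T *m T' = 1%:M.
  rewrite /T /T' mulmxDl !mulmxDr -!scalemxAl -!scalemxAr PP QQ PQ QP !scaler0 addr0 add0r.
  by rewrite !scalerA !mulfV ?gt_eqF // !scale1r.
have Tsym : T^T = T by rewrite /T linearD !linearZ /= Psym Qsym.
have Gsym : G^T = G by rewrite /G trmx_mul trmxK.
have Bsym : B^T = B.
  by rewrite /B !linearD !linearZ /= trmx_mul trmxK Psym Qsym.
have Bpos (v : 'rV[R]_d) : v != 0 -> 0 < (v *m B *m v^T) 0 0.
  move=> vn0.
  have e1 : (v *m B *m v^T) 0 0 = ((v *m D^T) *m (v *m D^T)^T) 0 0
      + lambda1 * ((v *m Q) *m (v *m Q)^T) 0 0 + lambda2 * ((v *m P) *m (v *m P)^T) 0 0.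
    rewrite !trmx_mul Qsym Psym trmxK /B !mulmxA -(mulmxA v Q Q) -(mulmxA v P P) QQ PP.
    rewrite !mulmxDr !mulmxDl -!scalemxAr -!scalemxAl !mxE !mulmxA.
    by [].
  rewrite e1.
  have t1 := quad_ge0 (v *m D^T).
  have [vP0|vPn0] := eqVneq (v *m P) 0.
    have vQn0 : v *m Q != 0.
      by move: vn0; rewrite -{1}[v]mulmx1 -PQ1 mulmxDr vP0 add0r.
    have h2 := quad_gt0 _ vQn0; have h3 := quad_ge0 (v *m P).
    have := mulr_gt0 l1 h2; have := mulr_ge0 (ltW l2) h3; lra.
  have h3 := quad_gt0 _ vPn0; have h2 := quad_ge0 (v *m Q).
  have := mulr_ge0 (ltW l1) h2; have := mulr_gt0 l2 h3; lra.
pose C := T *m B *m T.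
have PC : PDm C.
  split; first by rewrite /C !trmx_mul Tsym Bsym mulmxA.
  move=> v vn0.
  have vTn0 : v *m T != 0.
    by apply: contraNneq vn0 => h; rewrite -[v]mulmx1 -TT' mulmxA h mul0mx.
  have := Bpos _ vTn0.
  by rewrite trmx_mul Tsym /C !mulmxA.
have hC := det_le_tr PC.
have detT : \det T = sa ^+ p * sb ^+ q by have [] := projP sa sb.
have detC : \det C = al ^+ p * be ^+ q * \det B.
  rewrite /C !det_mulmx detT mulrAC; congr (_ * _).
  by rewrite mulrACA -!exprMn -!expr2 !sqr_sqrtr ?ltW.
have trC : \tr C = d%:R.
  rewrite /C mxtrace_mulC mulmxA TT /B.
  rewrite !mulmxDl !mulmxDr -!scalemxAl -!scalemxAr PP QQ PQ QP !scaler0 ?addr0 ?add0r.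
  rewrite !mxtraceD !mxtraceZ trP trQ -/G -/gP -/gQ dpq natrD.
  have ea : al * gP + al * (lambda2 * p%:R) = p%:R.
    rewrite -mulrDr /al.
    have -> : gP + lambda2 * p%:R = a2 * p%:R.
      by rewrite /a2 mulrDl divfK ?gt_eqF // addrC mulrC.
    by rewrite mulKf ?gt_eqF.
  have eb : be * gQ + be * (lambda1 * q%:R) = q%:R.
    rewrite -mulrDr /be.
    have -> : gQ + lambda1 * q%:R = a1 * q%:R.
      by rewrite /a1 mulrDl divfK ?gt_eqF // addrC mulrC.
    by rewrite mulKf ?gt_eqF.
  by rewrite ea eb.
rewrite trC divff ?pnatr_eq0 -?lt0n ?(ltn_trans _ d2) // expr1n detC in hC.
have hpos : 0 < al ^+ p * be ^+ q by rewrite mulr_gt0 // exprn_gt0.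
have detB : \det B <= a2 ^+ p * a1 ^+ q.
  rewrite -(ler_pM2l hpos) mulrACA -!exprMn /al /be !mulVf ?gt_eqF // !expr1n mulr1.
  exact: hC.
have detM : \det (lambda1 *: Q + lambda2 *: P) = lambda2 ^+ p * lambda1 ^+ q.
  by rewrite addrC; have [] := projP lambda2 lambda1.
set X := 1 + k%:R / (p%:R * lambda2).
set Y := 1 + k%:R / (q%:R * lambda1).
have kR : 0 <= (k%:R : R) by [].
have X1 : 1 <= X by rewrite /X lerDl divr_ge0 // mulr_ge0 // ltW.
have Y1 : 1 <= Y by rewrite /Y lerDl divr_ge0 // mulr_ge0 // ltW.
have hr : \det B / \det (lambda1 *: Q + lambda2 *: P) <= X ^+ p * Y ^+ q.
  rewrite detM ler_pdivrMr ?mulr_gt0 ?exprn_gt0 //.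
  apply: le_trans detB _.
  rewrite mulrACA -!exprMn.
  apply: ler_pM.
  - exact: exprn_ge0 (ltW a2p).
  - exact: exprn_ge0 (ltW a1p).
  - apply: (lerXn2r p); rewrite ?nnegrE.
    + exact: ltW.
    + by rewrite mulr_ge0 // ltW // (lt_le_trans ltr01).
    + rewrite /X /a2 mulrDl mul1r lerD2l invfM -mulrA divfK ?gt_eqF //.
      rewrite ler_pM2r ?invr_gt0 //.
      by apply: le_trans gPQ; rewrite lerDl.
  - apply: (lerXn2r q); rewrite ?nnegrE.
    + exact: ltW.
    + by rewrite mulr_ge0 // ltW // (lt_le_trans ltr01).
    + rewrite /Y /a1 mulrDl mul1r lerD2l invfM -mulrA divfK ?gt_eqF //.
      rewrite ler_pM2r ?invr_gt0 //.
      by apply: le_trans gPQ; rewrite lerDr.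
have lX : 0 <= ln X by apply: ln_ge0.
have lY : 0 <= ln Y by apply: ln_ge0.
set r := \det B / _.
have [r0|r0] := lerP r 0.
  by rewrite ln0 // addr_ge0 // mulr_ge0.
have Xp : 0 < X by apply: lt_le_trans ltr01 X1.
have Yp : 0 < Y by apply: lt_le_trans ltr01 Y1.
have rpos : r \in Num.pos by rewrite posrE.
have Zpos : X ^+ p * Y ^+ q \in Num.pos.
  by rewrite posrE mulr_gt0 // exprn_gt0.
have h : ln r <= ln (X ^+ p * Y ^+ q) by rewrite (ler_ln rpos Zpos).
have e := @ln_prod_pow R p q X Y Xp Yp.
rewrite -e. exact: h.
Qed.

Theorem lemma2 (R : realType) (d p k : nat) (P : 'M[R]_d)
  (lambda1 lambda2 : R) (x : 'I_k -> 'rV[R]_d) :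
  (2 <= d)%N ->
  orth_proj P -> \rank P = p -> (1 <= p)%N -> (p <= d - 1)%N ->
  0 < lambda1 -> 0 < lambda2 -> (1 <= k)%N ->
  (forall i, eucl_norm (x i) <= 1) ->
  let Pperp := 1%:M - P in
  let q := (d - p)%N in
  let D : 'M[R]_(k, d) := \matrix_(i < k) x i in
  let B := D^T *m D + lambda1 *: Pperp + lambda2 *: P in
  ln (\det B / \det (lambda1 *: Pperp + lambda2 *: P))
    <= p%:R * ln (1 + k%:R / (p%:R * lambda2))
       + q%:R * ln (1 + k%:R / (q%:R * lambda1)).
Proof.
move=> d2 oP rP p1 pd l1 l2 k1 xn.
exact: (@lemma2_aux R d p k P lambda1 lambda2 x d2 oP rP p1 pd l1 l2 k1 xn).
Qed.
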